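(* Let $\nu_0=0$ and $s,\gamma,u>0$. Let $y(t;y_0)$ be the solution of $\dot y=F(y)$, $y(0)=y_0\in[0,1]$, where $F(y)=-y(1-y)[s+\gamma(1-y)]+u(1-y)$, and set $y_\infty(y_0)=\lim_{t\to\infty}y(t;y_0)$. (i) If $0<u<s$, or if $u=s$ and $s<\gamma$, then $y_\infty(y_0)=\bar y_2$ for $y_0\in[0,1)$ and $y_\infty(1)=\bar y_1$. (ii) If $s<\gamma$ and $s<u\le\check u$, then $y_\infty(y_0)=\bar y_2$ for $y_0\in[0,\bar y_3)$, $y_\infty(\bar y_3)=\bar y_3$, and $y_\infty(y_0)=\bar y_1$ for $y_0\in(\bar y_3,\bar y_1]$. (iii) If $u>\check u$, or if $s\ge\gamma$ and $s\le u\le\check u$, then $y_\infty(y_0)=\bar y_1$ for all $y_0\in[0,1]$.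
   Context: Here $\check u=\frac1\gamma\big(\frac{s+\gamma}2\big)^2$, $\bar y_1=1$, $\sigma=(1+s/\gamma)^2-4u/\gamma$, and, whenever $\sigma\ge 0$, $\bar y_2=\frac12(1+\frac s\gamma-\sqrt\sigma)$ and $\bar y_3=\frac12(1+\frac s\gamma+\sqrt\sigma)$. The limit $y_\infty(y_0)$ exists because $t\mapsto y(t;y_0)$ is monotone. *)

(* Defs.v *)
From Stdlib Require Import Reals.
From Coquelicot Require Import Coquelicot.
Open Scope R_scope.

Definition Fvec (s gamma u y : R) : R :=
  - y * (1 - y) * (s + gamma * (1 - y)) + u * (1 - y).

Definition ucheck (s gamma : R) : R := / gamma * ((s + gamma) / 2) ^ 2.
Definition ybar1 : R := 1.
Definition sigma (s gamma u : R) : R := (1 + s / gamma) ^ 2 - 4 * u / gamma.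
Definition ybar2 (s gamma u : R) : R := / 2 * (1 + s / gamma - sqrt (sigma s gamma u)).
Definition ybar3 (s gamma u : R) : R := / 2 * (1 + s / gamma + sqrt (sigma s gamma u)).

Definition is_solution (s gamma u y0 : R) (y : R -> R) : Prop :=
  y 0 = y0 /\
  filterlim y (at_right 0) (locally y0) /\
  (forall t, 0 < t -> is_derive y t (Fvec s gamma u (y t))).

Definition has_yinf (y : R -> R) (l : R) : Prop := is_lim y p_infty l.

(* Main.v *)
Require Import Defs.
From Stdlib Require Import Reals.
From Coquelicot Require Import Coquelicot.
From Stdlib Require Import Lra Psatz.
Open Scope R_scope.

Definition is_sol (f : R -> R) (y0 : R) (y : R -> R) : Prop :=
  y 0 = y0 /\
  filterlim y (at_right 0) (locally y0) /\
  (forall t, 0 < t -> is_derive y t (f (y t))).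

Definition ext (y : R -> R) (t : R) : R := if Rle_dec 0 t then y t else y 0.

Lemma ext_pos y t : 0 <= t -> ext y t = y t.
Proof. intros; unfold ext; destruct Rle_dec; [reflexivity| lra]. Qed.

Lemma ext_loc y t : 0 < t -> locally t (fun s => y s = ext y s).
Proof.
  intros Ht. exists (mkposreal t Ht). intros s Hs.
  rewrite ext_pos; auto.
  change (Rabs (s - t) < t) in Hs. apply Rabs_def2 in Hs. lra.
Qed.

Lemma ext_derive f y0 y t : is_sol f y0 y -> 0 < t -> is_derive (ext y) t (f (ext y t)).
Proof.
  intros [_ [_ Hd]] Ht. rewrite ext_pos by lra.
  apply is_derive_ext_loc with y. apply ext_loc; auto. auto.
Qed.

Lemma ext_cont f y0 y c : is_sol f y0 y -> continuity_pt (ext y) c.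
Proof.
  intros Hs. apply continuity_pt_filterlim.
  destruct (Rlt_dec 0 c) as [Hc|Hc].
  - apply filterlim_ext_loc with y. apply ext_loc; auto.
    rewrite ext_pos by lra. apply (@ex_derive_continuous R_AbsRing R_NormedModule y c).
    eexists. apply Hs; auto.
  - destruct (Rlt_dec c 0) as [Hc'|Hc'].
    + apply filterlim_ext_loc with (fun _ => y 0).
      exists (mkposreal (-c) ltac:(lra)). intros s Hs'.
      change (Rabs (s - c) < -c) in Hs'. apply Rabs_def2 in Hs'.
      unfold ext. destruct Rle_dec; [lra|reflexivity].
      unfold ext. destruct Rle_dec; [lra|]. apply filterlim_const.
    + assert (c = 0) by lra. subst c.
      destruct Hs as [H0 [Hr _]].
      unfold ext at 2. destruct Rle_dec; [|lra]. rewrite H0.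
      apply filterlim_locally. intros eps.
      pose proof (proj1 (@filterlim_locally R R_UniformSpace (at_right 0) _ y y0) Hr eps) as Hr2. clear Hr. rename Hr2 into Hr.
      destruct Hr as [d Hd]. exists d. intros x Hx.
      unfold ext. destruct Rle_dec as [Hx0|Hx0].
      * destruct (Req_dec x 0) as [->|Hn].
        -- rewrite H0. apply ball_center.
        -- apply Hd; auto. lra.
      * rewrite H0. apply ball_center.
Qed.

Lemma wderiv (h p : R -> R) k x :
  is_derive h x (h x * p x) ->
  is_derive (fun t => h t ^ 2 * exp (k * t)) x (exp (k * x) * (h x) ^ 2 * (2 * p x + k)).
Proof.
  intros Hd. auto_derive. - exists (h x * p x); exact Hd. - change (fun x0 : R => h x0) with h. rewrite (is_derive_unique _ _ _ Hd). ring.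


Qed.

Lemma gron (h p : R -> R) L T : 0 < T ->
  (forall x, 0 < x < T -> is_derive h x (h x * p x)) ->
  (forall x, 0 <= x <= T -> continuity_pt h x) ->
  (forall x, 0 <= x <= T -> Rabs (p x) <= L) ->
  (h 0 = 0 -> h T = 0) /\ (h 0 <> 0 -> h T <> 0).
Proof.
  intros HT Hd Hc Hp.
  assert (Hw : forall k, exists c, 0 <= c <= T /\
     h T ^ 2 * exp (k * T) - h 0 ^ 2 * exp (k * 0) =
     exp (k * c) * (h c) ^ 2 * (2 * p c + k) * (T - 0)).
  { intros k.
    destruct (MVT_gen (fun t => h t ^ 2 * exp (k * t)) 0 T
       (fun x => exp (k * x) * (h x) ^ 2 * (2 * p x + k))) as [c [Hc1 Hc2]].
    - intros x Hx. rewrite Rmin_left, Rmax_right in Hx by lra.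
      apply wderiv, Hd; lra.
    - intros x Hx. rewrite Rmin_left, Rmax_right in Hx by lra.
      apply continuity_pt_mult.
      + apply (continuity_pt_comp h (fun z => z ^ 2) x); [apply Hc; lra| reg].
      + apply continuity_pt_comp with (f1 := fun t => k * t) (f2 := exp).
        * reg.
        * apply derivable_continuous_pt. apply derivable_pt_exp.
    - rewrite Rmin_left, Rmax_right in Hc1 by lra. exists c; split; auto. }
  split.
  - intros H0. destruct (Hw (- 2 * L)) as [c [Hc1 Hc2]].
    rewrite Rmult_0_r, exp_0, Rmult_1_r, H0 in Hc2.
    specialize (Hp c Hc1). apply Rabs_le_between in Hp.
    assert (E1 : 0 < exp (-2 * L * c)) by apply exp_pos.
    assert (E2 : 0 < exp (-2 * L * T)) by apply exp_pos.
    assert (h T ^ 2 * exp (-2 * L * T) <= 0).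
    { assert (HA : 0 <= exp (-2 * L * c) * h c ^ 2) by (apply Rmult_le_pos; nra).
      set (A := exp (-2 * L * c) * h c ^ 2) in *.
      assert (A * (2 * p c + -2 * L) <= 0).
      { rewrite <- (Rmult_0_r A). apply Rmult_le_compat_l; lra. }
      nra. }
    assert (h T ^ 2 = 0) by nra. nra.
  - intros H0 HT0. destruct (Hw (2 * L)) as [c [Hc1 Hc2]].
    rewrite Rmult_0_r, exp_0, Rmult_1_r, HT0 in Hc2.
    specialize (Hp c Hc1). apply Rabs_le_between in Hp.
    assert (E1 : 0 < exp (2 * L * c)) by apply exp_pos.
    assert (0 < h 0 ^ 2) by (rewrite <- Rsqr_pow2; apply Rsqr_pos_lt; auto).
    assert (HA : 0 <= exp (2 * L * c) * h c ^ 2) by (apply Rmult_le_pos; nra).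
    set (A := exp (2 * L * c) * h c ^ 2) in *.
    assert (0 <= A * (2 * p c + 2 * L)) by (apply Rmult_le_pos; lra).
    nra.
Qed.

Lemma sol_gron f y0 y e q T : is_sol f y0 y ->
  (forall x, f x = (x - e) * q x) -> (forall x, continuity_pt q x) -> 0 < T ->
  (y0 = e -> y T = e) /\ (y0 <> e -> y T <> e).
Proof.
  intros Hs Hf Hq HT.
  destruct (continuity_ab_maj (fun t => Rabs (q (ext y t))) 0 T) as [M [HM _]].
  { lra. }
  { intros c _. apply (continuity_pt_comp (fun t => q (ext y t)) Rabs).
    - apply (continuity_pt_comp (ext y) q). apply (ext_cont f y0); auto. apply Hq.
    - apply Rcontinuity_abs. }
  destruct (gron (fun t => ext y t - e) (fun t => q (ext y t)) (Rabs (q (ext y M))) T HT)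
    as [G1 G2].
  - intros x Hx. pose proof (ext_derive f y0 y x Hs ltac:(lra)) as Hd.
    auto_derive.
    + exists (f (ext y x)); exact Hd.
    + change (fun x0 : R => ext y x0) with (ext y). rewrite (is_derive_unique _ _ _ Hd), Hf. ring.
  - intros x _. apply continuity_pt_minus. apply (ext_cont f y0); auto.
    apply continuity_pt_const. intros a b; auto.
  - intros x Hx. apply HM; auto.
  - destruct Hs as [H0 _].
    rewrite !ext_pos in G1, G2 by lra. rewrite H0 in G1, G2.
    split; intros HH. { assert (y T - e = 0) by (apply G1; lra). lra. } { intro; apply G2; lra. }
Qed.

Lemma sol_cont f y0 y : is_sol f y0 y -> continuity (ext y).
Proof. intros Hs c. apply (ext_cont f y0); auto. Qed.

Lemma stay_eq f y0 y e q : is_sol f y0 y ->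
  (forall x, f x = (x - e) * q x) -> (forall x, continuity_pt q x) ->
  y0 = e -> forall t, 0 <= t -> y t = e.
Proof.
  intros Hs Hf Hq He t Ht. destruct (Req_dec t 0) as [->|Hn].
  - destruct Hs as [H0 _]; congruence.
  - apply (sol_gron f y0 y e q t Hs Hf Hq ltac:(lra)); auto.
Qed.

Lemma stay_neq f y0 y e q : is_sol f y0 y ->
  (forall x, f x = (x - e) * q x) -> (forall x, continuity_pt q x) ->
  y0 <> e -> forall t, 0 <= t -> y t <> e.
Proof.
  intros Hs Hf Hq He t Ht. destruct (Req_dec t 0) as [->|Hn].
  - destruct Hs as [H0 _]; congruence.
  - apply (sol_gron f y0 y e q t Hs Hf Hq ltac:(lra)); auto.
Qed.

Lemma stay_below f y0 y e q : is_sol f y0 y ->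
  (forall x, f x = (x - e) * q x) -> (forall x, continuity_pt q x) ->
  y0 < e -> forall t, 0 <= t -> y t < e.
Proof.
  intros Hs Hf Hq He t Ht.
  assert (Hn := stay_neq f y0 y e q Hs Hf Hq ltac:(lra) t Ht).
  destruct (Rlt_dec (y t) e) as [|Hc]; auto. exfalso.
  assert (H0 : y 0 = y0) by apply Hs.
  destruct (IVT_gen (ext y) 0 t e (sol_cont f y0 y Hs)) as [x [Hx1 Hx2]].
  - rewrite !ext_pos by lra. rewrite H0.
    rewrite Rmin_left, Rmax_right by lra. lra.
  - rewrite Rmin_left, Rmax_right in Hx1 by lra.
    rewrite ext_pos in Hx2 by lra.
    apply (stay_neq f y0 y e q Hs Hf Hq ltac:(lra) x); tauto.
Qed.

Lemma stay_above f y0 y e q : is_sol f y0 y ->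
  (forall x, f x = (x - e) * q x) -> (forall x, continuity_pt q x) ->
  e < y0 -> forall t, 0 <= t -> e < y t.
Proof.
  intros Hs Hf Hq He t Ht.
  assert (Hn := stay_neq f y0 y e q Hs Hf Hq ltac:(lra) t Ht).
  destruct (Rlt_dec e (y t)) as [|Hc]; auto. exfalso.
  assert (H0 : y 0 = y0) by apply Hs.
  destruct (IVT_gen (ext y) 0 t e (sol_cont f y0 y Hs)) as [x [Hx1 Hx2]].
  - rewrite !ext_pos by lra. rewrite H0.
    rewrite Rmin_right, Rmax_left by lra. lra.
  - rewrite Rmin_left, Rmax_right in Hx1 by lra.
    rewrite ext_pos in Hx2 by lra.
    apply (stay_neq f y0 y e q Hs Hf Hq ltac:(lra) x); tauto.
Qed.

Lemma conv_up f y0 y a b : is_sol f y0 y -> (forall x, continuity_pt f x) ->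
  (forall t, 0 <= t -> a < y t < b) -> (forall x, a < x < b -> 0 < f x) ->
  is_lim y p_infty b.
Proof.
  intros Hs Hfc Hin Hpos.
  assert (H0 : y 0 = y0) by apply Hs.
  assert (MVT : forall t1 t2, 0 <= t1 < t2 -> exists c, t1 <= c <= t2 /\
              y t2 - y t1 = f (y c) * (t2 - t1)).
  { intros t1 t2 Ht.
    destruct (MVT_gen (ext y) t1 t2 (fun c => f (ext y c))) as [c [Hc1 Hc2]].
    - intros x Hx. rewrite Rmin_left, Rmax_right in Hx by lra.
      apply (ext_derive f y0); auto; lra.
    - intros x _. apply (ext_cont f y0); auto.
    - rewrite Rmin_left, Rmax_right in Hc1 by lra.
      rewrite !ext_pos in Hc2 by lra. exists c; split; auto. }
  assert (Mono : forall t1 t2, 0 <= t1 <= t2 -> y t1 <= y t2).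
  { intros t1 t2 Ht. destruct (Req_dec t1 t2) as [->|Hn]; [lra|].
    destruct (MVT t1 t2 ltac:(lra)) as [c [Hc1 Hc2]].
    assert (0 < f (y c)) by (apply Hpos, Hin; lra). nra. }
  apply is_lim_spec. intros eps. simpl.
  assert (Hy0 := Hin 0 (Rle_refl 0)). rewrite H0 in Hy0.
  destruct (Rlt_dec (b - eps) y0) as [Hl|Hl].
  { exists 0. intros t Ht. assert (Hb := Hin t ltac:(lra)).
    assert (y0 <= y t) by (rewrite <- H0; apply Mono; lra).
    apply Rabs_def1; lra. }
  destruct (continuity_ab_min f y0 (b - eps)) as [m [Hm1 Hm2]].
  { lra. } { intros; apply Hfc. }
  assert (Hfm : 0 < f m) by (apply Hpos; destruct eps; simpl in *; lra).
  set (T := 1 + (b - y0) / f m).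
  assert (HT : 0 < T).
  { unfold T. assert (0 < (b - y0) / f m) by (apply Rdiv_lt_0_compat; lra). lra. }
  assert (HyT : b - eps < y T).
  { destruct (Rlt_dec (b - eps) (y T)) as [|Hn]; auto. exfalso.
    destruct (MVT 0 T ltac:(lra)) as [c [Hc1 Hc2]].
    rewrite H0 in Hc2.
    assert (y0 <= y c) by (rewrite <- H0; apply Mono; lra).
    assert (y c <= y T) by (apply Mono; lra).
    assert (f m <= f (y c)) by (apply Hm1; lra).
    assert (HTb : y T < b) by (apply Hin; lra).
    assert (Hk : f m * T = f m + (b - y0)) by (unfold T; field; lra).
    nra. }
  exists T. intros t Ht.
  assert (y T <= y t) by (apply Mono; lra).
  assert (Hb := Hin t ltac:(lra)). apply Rabs_def1; lra.
Qed.

Lemma sol_opp f y0 y : is_sol f y0 y ->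
  is_sol (fun x => - f (- x)) (- y0) (fun t => - y t).
Proof.
  intros [H0 [Hl Hd]]. split; [|split].
  - rewrite H0; auto.
  - apply filterlim_comp with (G := locally y0); auto.
    apply (@filterlim_opp R_AbsRing R_NormedModule y0).
  - intros t Ht. rewrite Ropp_involutive.
    apply (@is_derive_opp R_AbsRing R_NormedModule). auto.
Qed.

Lemma conv_down f y0 y a b : is_sol f y0 y -> (forall x, continuity_pt f x) ->
  (forall t, 0 <= t -> b < y t < a) -> (forall x, b < x < a -> f x < 0) ->
  is_lim y p_infty b.
Proof.
  intros Hs Hfc Hin Hneg.
  assert (H := conv_up _ _ _ (- a) (- b) (sol_opp f y0 y Hs)).
  apply is_lim_ext with (fun t => - - y t). intros; ring.
  replace (Finite b) with (Rbar_opp (- b)) by (simpl; f_equal; ring).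
  apply is_lim_opp. apply H.
  - intros x. apply (continuity_pt_comp (fun x => f (- x)) Ropp).
    apply (continuity_pt_comp Ropp f). reg. apply Hfc. reg.
  - intros t Ht. specialize (Hin t Ht). lra.
  - intros x Hx. assert (f (- x) < 0) by (apply Hneg; lra). lra.
Qed.

Lemma up_free f y0 y b : is_sol f y0 y -> (forall x, continuity_pt f x) ->
  (forall t, 0 <= t -> y t < b) -> (forall x, x < b -> 0 < f x) ->
  is_lim y p_infty b.
Proof.
  intros Hs Hfc Hin Hpos.
  assert (H0 : y 0 = y0) by apply Hs.
  assert (Hge : forall t, 0 <= t -> y0 <= y t).
  { intros t Ht. destruct (Req_dec t 0) as [->|Hn]; [lra|].
    destruct (MVT_gen (ext y) 0 t (fun c => f (ext y c))) as [c [Hc1 Hc2]].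
    - intros x Hx. rewrite Rmin_left, Rmax_right in Hx by lra.
      apply (ext_derive f y0); auto; lra.
    - intros x _. apply (ext_cont f y0); auto.
    - rewrite Rmin_left, Rmax_right in Hc1 by lra.
      rewrite !ext_pos in Hc2 by lra.
      assert (0 < f (y c)) by (apply Hpos, Hin; lra). nra. }
  apply (conv_up f y0 y (y0 - 1) b); auto.
  intros t Ht. specialize (Hge t Ht). specialize (Hin t Ht). lra.
  intros x Hx. apply Hpos; lra.
Qed.

Lemma lim_const (y : R -> R) e : (forall t, 0 <= t -> y t = e) -> is_lim y p_infty e.
Proof.
  intros H. apply is_lim_spec. intros eps. exists 0. intros t Ht.
  rewrite H by lra. rewrite Rminus_eq_0, Rabs_R0. apply cond_pos.
Qed.

Definition qF (s g u e x : R) : R :=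
  - g * (x * x + x * e + e * e) + (2 * g + s) * (x + e) - (s + g + u).

Lemma Fq s g u e : Fvec s g u e = 0 -> forall x, Fvec s g u x = (x - e) * qF s g u e x.
Proof.
  intros He x. assert (Fvec s g u x = Fvec s g u e + (x - e) * qF s g u e x)
    by (unfold Fvec, qF; ring). lra.
Qed.

Lemma qF_cont s g u e x : continuity_pt (qF s g u e) x.
Proof. unfold qF. reg. Qed.

Lemma F_cont s g u x : continuity_pt (Fvec s g u) x.
Proof. unfold Fvec. reg. Qed.

Lemma F_fact s g u x : 0 < g -> 0 <= Defs.sigma s g u ->
  Fvec s g u x = g * (1 - x) * (x - ybar2 s g u) * (x - ybar3 s g u).
Proof.
  intros Hg Hs. assert (Hr := pow2_sqrt _ Hs).
  set (r := sqrt (Defs.sigma s g u)) in *.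
  assert (E : g * (1 - x) * (x - ybar2 s g u) * (x - ybar3 s g u) =
     g * (1 - x) * ((x - (1 + s / g) / 2) ^ 2 - r ^ 2 / 4))
    by (unfold ybar2, ybar3; fold r; field; lra).
  rewrite E, Hr. unfold Defs.sigma, Fvec. field. lra.
Qed.

Lemma F_g s g u x : Fvec s g u x = (1 - x) * (g * x * x - (s + g) * x + u).
Proof. unfold Fvec; ring. Qed.

Lemma F_1 s g u : Fvec s g u 1 = 0.
Proof. unfold Fvec; ring. Qed.

Lemma sq_lt a b : 0 <= a -> 0 <= b -> a ^ 2 < b ^ 2 -> a < b.
Proof. intros. destruct (Rlt_dec a b); auto. nra. Qed.

Lemma sq_le a b : 0 <= a -> 0 <= b -> a ^ 2 <= b ^ 2 -> a <= b.
Proof. intros. destruct (Rle_dec a b); auto. nra. Qed.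

Lemma sgn_pos g a b c : 0 < g * a -> 0 < b * c -> 0 < g * a * b * c.
Proof. intros; rewrite Rmult_assoc; apply Rmult_lt_0_compat; auto. Qed.

Lemma sgn_neg g a b c : 0 < g * a -> b * c < 0 -> g * a * b * c < 0.
Proof. intros. rewrite Rmult_assoc. nra. Qed.

Lemma sol_of s g u y0 y : is_solution s g u y0 y -> is_sol (Fvec s g u) y0 y.
Proof. auto. Qed.

Theorem corollary2p4 (s gamma u : R) (hs : 0 < s) (hg : 0 < gamma) (hu : 0 < u) :
  ((u < s \/ (u = s /\ s < gamma)) ->
     forall (y0 : R) (y : R -> R), 0 <= y0 <= 1 -> is_solution s gamma u y0 y ->
       (y0 < 1 -> has_yinf y (ybar2 s gamma u)) /\
       (y0 = 1 -> has_yinf y ybar1))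
  /\
  ((s < gamma /\ s < u /\ u <= ucheck s gamma) ->
     forall (y0 : R) (y : R -> R), 0 <= y0 <= 1 -> is_solution s gamma u y0 y ->
       (y0 < ybar3 s gamma u -> has_yinf y (ybar2 s gamma u)) /\
       (y0 = ybar3 s gamma u -> has_yinf y (ybar3 s gamma u)) /\
       (ybar3 s gamma u < y0 -> has_yinf y ybar1))
  /\
  ((ucheck s gamma < u \/ (gamma <= s /\ s <= u /\ u <= ucheck s gamma)) ->
     forall (y0 : R) (y : R -> R), 0 <= y0 <= 1 -> is_solution s gamma u y0 y ->
       has_yinf y ybar1).
Proof.
  set (A := s / gamma). set (B := u / gamma).
  assert (HA : 0 < A) by (apply Rdiv_lt_0_compat; lra).
  assert (HB : 0 < B) by (apply Rdiv_lt_0_compat; lra).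
  assert (Hsig : Defs.sigma s gamma u = (1 + A) ^ 2 - 4 * B)
    by (unfold Defs.sigma, A, B; field; lra).
  assert (Hy2 : ybar2 s gamma u = (1 + A - sqrt (Defs.sigma s gamma u)) / 2)
    by (unfold ybar2; fold A; field).
  assert (Hy3 : ybar3 s gamma u = (1 + A + sqrt (Defs.sigma s gamma u)) / 2)
    by (unfold ybar3; fold A; field).
  assert (Huc : u <= ucheck s gamma <-> 0 <= Defs.sigma s gamma u).
  { unfold ucheck. rewrite Hsig. unfold A, B.
    replace ((1 + s / gamma) ^ 2 - 4 * (u / gamma))
      with (4 / gamma * (/ gamma * ((s + gamma) / 2) ^ 2 - u)) by (field; lra).
    assert (0 < 4 / gamma) by (apply Rdiv_lt_0_compat; lra).
    split; intros; nra. }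
  assert (HF1 := Fq s gamma u 1 (F_1 s gamma u)).
  split; [|split].
  -
    intros Hc y0 y Hy0 Hsol. apply sol_of in Hsol.
    assert (HBA : B < A \/ (B = A /\ A < 1)).
    { unfold A, B. destruct Hc as [H|[H1 H2]].
      - left. apply Rmult_lt_compat_r; auto. apply Rinv_0_lt_compat; lra.
      - right. subst. split; auto. apply (Rmult_lt_reg_r gamma); auto.
        unfold Rdiv. rewrite Rmult_assoc, Rinv_l by lra. lra. }
    assert (Hs0 : 0 < Defs.sigma s gamma u).
    { rewrite Hsig. replace ((1 + A) ^ 2 - 4 * B) with ((1 - A) ^ 2 + 4 * (A - B)) by ring.
      assert (Hp0 : 0 <= (1 - A) ^ 2) by apply pow2_ge_0.
      destruct HBA as [HH|[H1 H2]]; [lra|]. rewrite H1.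
      assert (0 < (1 - A) ^ 2) by (apply pow_lt; lra). lra. }
    assert (Hr2 := pow2_sqrt _ (Rlt_le _ _ Hs0)).
    assert (Hr0 := sqrt_lt_R0 _ Hs0).
    set (r := sqrt (Defs.sigma s gamma u)) in *.
    rewrite Hsig in Hr2.
    assert (Hfac : forall x, Fvec s gamma u x =
       gamma * (1 - x) * (x - ybar2 s gamma u) * (x - ybar3 s gamma u))
      by (intros; apply F_fact; lra).
    set (y2 := ybar2 s gamma u) in *. set (y3 := ybar3 s gamma u) in *.
    assert (Hy21 : y2 < 1).
    { rewrite Hy2. destruct (Rle_dec A 1); [lra|].
      destruct HBA as [HH|[H1 H2]]; [|lra].
      assert (A - 1 < r); [|lra]. apply sq_lt; [lra|lra|rewrite Hr2; nra]. }
    assert (Hy31 : 1 <= y3).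
    { rewrite Hy3. destruct (Rle_dec 1 A); [lra|].
      assert (1 - A <= r); [|lra]. apply sq_le; [lra|lra|rewrite Hr2; destruct HBA as [HH|[H1 H2]]; nra]. }
    assert (H23 : y2 < y3) by (rewrite Hy2, Hy3; lra).
    assert (HF2 : forall x, Fvec s gamma u x = (x - y2) * qF s gamma u y2 x).
    { apply Fq. rewrite Hfac. ring. }
    split.
    + intros Hlt. unfold has_yinf.
      destruct (Rtotal_order y0 y2) as [Hl|[He|Hg]].
      * apply (up_free (Fvec s gamma u) y0 y y2 Hsol (F_cont s gamma u)).
        -- intros t Ht. apply (stay_below _ y0 y y2 _ Hsol HF2 (qF_cont s gamma u y2) Hl t Ht).
        -- intros x Hx. rewrite Hfac. apply sgn_pos; nra.
      * apply lim_const. apply (stay_eq _ y0 y y2 _ Hsol HF2 (qF_cont s gamma u y2) He).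
      * apply (conv_down (Fvec s gamma u) y0 y 1 y2 Hsol (F_cont s gamma u)).
        -- intros t Ht. split.
           ++ apply (stay_above _ y0 y y2 _ Hsol HF2 (qF_cont s gamma u y2) Hg t Ht).
           ++ apply (stay_below _ y0 y 1 _ Hsol HF1 (qF_cont s gamma u 1) Hlt t Ht).
        -- intros x Hx. rewrite Hfac. apply sgn_neg; nra.
    + intros He. unfold has_yinf, ybar1.
      apply lim_const. apply (stay_eq _ y0 y 1 _ Hsol HF1 (qF_cont s gamma u 1) He).
  -
    intros [Hsg [Hsu Huc']] y0 y Hy0 Hsol. apply sol_of in Hsol.
    assert (Hs0 : 0 <= Defs.sigma s gamma u) by (apply Huc; auto).
    assert (HA1 : A < 1).
    { apply (Rmult_lt_reg_r gamma); auto. unfold A, Rdiv.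
      rewrite Rmult_assoc, Rinv_l by lra. lra. }
    assert (HBA : A < B) by (apply Rmult_lt_compat_r; auto; apply Rinv_0_lt_compat; lra).
    assert (Hr2 := pow2_sqrt _ Hs0).
    assert (Hr0 := sqrt_pos (Defs.sigma s gamma u)).
    set (r := sqrt (Defs.sigma s gamma u)) in *.
    rewrite Hsig in Hr2.
    assert (Hfac : forall x, Fvec s gamma u x =
       gamma * (1 - x) * (x - ybar2 s gamma u) * (x - ybar3 s gamma u))
      by (intros; apply F_fact; lra).
    set (y2 := ybar2 s gamma u) in *. set (y3 := ybar3 s gamma u) in *.
    assert (Hy31 : y3 < 1).
    { rewrite Hy3. assert (r < 1 - A); [|lra]. apply sq_lt; [lra|lra|rewrite Hr2; nra]. }
    assert (H23 : y2 <= y3) by (rewrite Hy2, Hy3; lra).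
    assert (HF2 : forall x, Fvec s gamma u x = (x - y2) * qF s gamma u y2 x).
    { apply Fq. rewrite Hfac. ring. }
    assert (HF3 : forall x, Fvec s gamma u x = (x - y3) * qF s gamma u y3 x).
    { apply Fq. rewrite Hfac. ring. }
    split; [|split].
    + intros Hlt. unfold has_yinf.
      destruct (Rtotal_order y0 y2) as [Hl|[He|Hg]].
      * apply (up_free (Fvec s gamma u) y0 y y2 Hsol (F_cont s gamma u)).
        -- intros t Ht. apply (stay_below _ y0 y y2 _ Hsol HF2 (qF_cont s gamma u y2) Hl t Ht).
        -- intros x Hx. rewrite Hfac. apply sgn_pos; nra.
      * apply lim_const. apply (stay_eq _ y0 y y2 _ Hsol HF2 (qF_cont s gamma u y2) He).
      * apply (conv_down (Fvec s gamma u) y0 y y3 y2 Hsol (F_cont s gamma u)).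
        -- intros t Ht. split.
           ++ apply (stay_above _ y0 y y2 _ Hsol HF2 (qF_cont s gamma u y2) Hg t Ht).
           ++ apply (stay_below _ y0 y y3 _ Hsol HF3 (qF_cont s gamma u y3) Hlt t Ht).
        -- intros x Hx. rewrite Hfac. apply sgn_neg; nra.
    + intros He. unfold has_yinf.
      apply lim_const. apply (stay_eq _ y0 y y3 _ Hsol HF3 (qF_cont s gamma u y3) He).
    + intros Hgt. unfold has_yinf, ybar1.
      destruct (Req_dec y0 1) as [He|Hn].
      * apply lim_const. apply (stay_eq _ y0 y 1 _ Hsol HF1 (qF_cont s gamma u 1) He).
      * apply (conv_up (Fvec s gamma u) y0 y y3 1 Hsol (F_cont s gamma u)).
        -- intros t Ht. split.
           ++ apply (stay_above _ y0 y y3 _ Hsol HF3 (qF_cont s gamma u y3) Hgt t Ht).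
           ++ apply (stay_below _ y0 y 1 _ Hsol HF1 (qF_cont s gamma u 1) ltac:(lra) t Ht).
        -- intros x Hx. rewrite Hfac. apply sgn_pos; nra.
  -
    intros Hc y0 y Hy0 Hsol. apply sol_of in Hsol. unfold has_yinf, ybar1.
    assert (Hgpos : forall x, x < 1 -> 0 < gamma * x * x - (s + gamma) * x + u).
    { intros x Hx. destruct Hc as [H|[H1 [H2 H3]]].
      - unfold ucheck in H.
        replace (gamma * x * x - (s + gamma) * x + u) with
          (gamma * (x - (s + gamma) / (2 * gamma)) ^ 2 + (u - / gamma * ((s + gamma) / 2) ^ 2))
          by (field; lra).
        assert (0 <= gamma * (x - (s + gamma) / (2 * gamma)) ^ 2).
        { apply Rmult_le_pos; [lra| apply pow2_ge_0]. }
        lra.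
      - replace (gamma * x * x - (s + gamma) * x + u) with
          ((1 - x) * (s - gamma * x) + (u - s)) by ring.
        assert (0 < (1 - x) * (s - gamma * x)) by (apply Rmult_lt_0_compat; nra).
        lra. }
    destruct (Req_dec y0 1) as [He|Hn].
    + apply lim_const. apply (stay_eq _ y0 y 1 _ Hsol HF1 (qF_cont s gamma u 1) He).
    + apply (up_free (Fvec s gamma u) y0 y 1 Hsol (F_cont s gamma u)).
      * intros t Ht. apply (stay_below _ y0 y 1 _ Hsol HF1 (qF_cont s gamma u 1) ltac:(lra) t Ht).
      * intros x Hx. rewrite F_g. apply Rmult_lt_0_compat; [lra|]. apply Hgpos; auto.
Qed.
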